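(* For each integer $n\geq 6$ there exists a closed non-degenerate spherical $n$-gon whose lifted rolling monodromy for radius ratio $\rho=3$ is trivial.
   Context: A spherical polygon on the unit sphere $S^2$ has edges that are arcs of great circles; it is non-degenerate if no three consecutive vertices lie on a great circle. Identify $\mathbb{R}^3$ with the imaginary quaternions. For radius ratio $\rho$ (stationary radius over moving radius), rolling along the polygon is the curve $(\mathbf v(t),q(t))\in S^2\times S^3$ with $\mathbf v(t)$ traversing the polygon once, $q(0)=1$, and $(\rho+1)\dot{\mathbf v}=\boldsymbol\omega\times\mathbf v$, $\boldsymbol\omega\cdot\mathbf v=0$, where $\boldsymbol\omega=2\dot q\bar q$ (the angular velocity of the rotation $\mathbf x\mapsto q\mathbf x\bar q$). The lifted rolling monodromy is the final value of $q$; it is trivial if it equals $1$. *)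

(* Defs.v *)
From Stdlib Require Import Reals Lra Arith.
From Coquelicot Require Import Coquelicot.
Open Scope R_scope.

(** Vectors of R^3 (identified with imaginary quaternions) *)
Record vec3 := V3 { x1 : R; x2 : R; x3 : R }.

Definition dot (a b : vec3) : R := x1 a * x1 b + x2 a * x2 b + x3 a * x3 b.
Definition cross (a b : vec3) : vec3 :=
  V3 (x2 a * x3 b - x3 a * x2 b)
     (x3 a * x1 b - x1 a * x3 b)
     (x1 a * x2 b - x2 a * x1 b).
Definition vadd (a b : vec3) : vec3 := V3 (x1 a + x1 b) (x2 a + x2 b) (x3 a + x3 b).
Definition vscale (c : R) (a : vec3) : vec3 := V3 (c * x1 a) (c * x2 a) (c * x3 a).
Definition det3 (a b c : vec3) : R := dot a (cross b c).

Definition on_S2 (v : vec3) : Prop := dot v v = 1.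

Record quat := Q { qr : R; qi : R; qj : R; qk : R }.

Definition qmul (p q : quat) : quat :=
  Q (qr p * qr q - qi p * qi q - qj p * qj q - qk p * qk q)
    (qr p * qi q + qi p * qr q + qj p * qk q - qk p * qj q)
    (qr p * qj q - qi p * qk q + qj p * qr q + qk p * qi q)
    (qr p * qk q + qi p * qj q - qj p * qi q + qk p * qr q).
Definition qconj (q : quat) : quat := Q (qr q) (- qi q) (- qj q) (- qk q).
Definition qscale (c : R) (q : quat) : quat := Q (c * qr q) (c * qi q) (c * qj q) (c * qk q).
Definition qone : quat := Q 1 0 0 0.
Definition on_S3 (q : quat) : Prop :=
  qr q * qr q + qi q * qi q + qj q * qj q + qk q * qk q = 1.
Definition qim (q : quat) : vec3 := V3 (qi q) (qj q) (qk q).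

Definition vderive (v : R -> vec3) (t : R) (dv : vec3) : Prop :=
  is_derive (fun s => x1 (v s)) t (x1 dv) /\
  is_derive (fun s => x2 (v s)) t (x2 dv) /\
  is_derive (fun s => x3 (v s)) t (x3 dv).
Definition qderive (q : R -> quat) (t : R) (dq : quat) : Prop :=
  is_derive (fun s => qr (q s)) t (qr dq) /\
  is_derive (fun s => qi (q s)) t (qi dq) /\
  is_derive (fun s => qj (q s)) t (qj dq) /\
  is_derive (fun s => qk (q s)) t (qk dq).

Definition rcont_on (a b : R) (f : R -> R) : Prop :=
  forall x, a <= x <= b ->
    filterlim f (within (fun s => a <= s <= b) (locally x)) (locally (f x)).
Definition qcont_on (a b : R) (q : R -> quat) : Prop :=
  rcont_on a b (fun s => qr (q s)) /\ rcont_on a b (fun s => qi (q s)) /\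
  rcont_on a b (fun s => qj (q s)) /\ rcont_on a b (fun s => qk (q s)).

(** Spherical n-gon: vertices P 0, ..., P (n-1), indices taken mod n (closed). *)
Definition vert (n : nat) (P : nat -> vec3) (i : nat) : vec3 := P (Nat.modulo i n).

(** closed non-degenerate spherical n-gon: all vertices on S^2, and no three
    cyclically consecutive vertices on a great circle (i.e. coplanar with 0). *)
Definition nondeg_polygon (n : nat) (P : nat -> vec3) : Prop :=
  (3 <= n)%nat /\
  (forall i, (i < n)%nat -> on_S2 (P i)) /\
  (forall i, (i < n)%nat ->
     det3 (vert n P i) (vert n P (i + 1)) (vert n P (i + 2)) <> 0).

(** The (minor) great-circle arc from a to b:
    arc a b s = cos s * a + sin s * u, with u the unit vector in the direction
    of the component of b orthogonal to a, for 0 <= s <= arclen a b. *)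
Definition arclen (a b : vec3) : R := acos (dot a b).
Definition arcdir (a b : vec3) : vec3 :=
  vscale (/ sqrt (1 - dot a b * dot a b)) (vadd b (vscale (- dot a b) a)).
Definition arc (a b : vec3) (s : R) : vec3 :=
  vadd (vscale (cos s) a) (vscale (sin s) (arcdir a b)).

Definition traverses (n : nat) (P : nat -> vec3) (tt : nat -> R)
    (v : R -> vec3) : Prop :=
  tt 0%nat = 0 /\ tt n = 1 /\
  (forall i, (i < n)%nat -> tt i < tt (S i)) /\
  (forall i, (i < n)%nat ->
     exists phi : R -> R,
       phi (tt i) = 0 /\
       phi (tt (S i)) = arclen (vert n P i) (vert n P (S i)) /\
       (forall s u, tt i <= s -> s <= u -> u <= tt (S i) -> phi s <= phi u) /\
       rcont_on (tt i) (tt (S i)) phi /\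
       (forall s, tt i < s < tt (S i) -> ex_derive phi s) /\
       (forall s, tt i <= s <= tt (S i) ->
          v s = arc (vert n P i) (vert n P (S i)) (phi s))).

(** Rolling along the polygon with radius ratio rho: the curve
    (v(t), q(t)) in S^2 x S^3, t in [0,1], with v traversing the polygon once,
    q(0) = 1, q continuous, and on each open edge-interval
    (rho+1) v' = omega x v, omega . v = 0, where omega = 2 q' conj(q)
    (required to be an imaginary quaternion, identified with a vector). *)
Definition rolling (rho : R) (n : nat) (P : nat -> vec3)
    (v : R -> vec3) (q : R -> quat) : Prop :=
  exists tt : nat -> R,
    traverses n P tt v /\
    q 0 = qone /\
    (forall t, 0 <= t <= 1 -> on_S3 (q t)) /\
    (forall i, (i < n)%nat -> qcont_on (tt i) (tt (S i)) q) /\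
    (forall i t, (i < n)%nat -> tt i < t < tt (S i) ->
       exists dv dq,
         vderive v t dv /\ qderive q t dq /\
         let w := qscale 2 (qmul dq (qconj (q t))) in
         qr w = 0 /\
         vscale (rho + 1) dv = cross (qim w) (v t) /\
         dot (qim w) (v t) = 0).

Definition trivial_lifted_monodromy (rho : R) (n : nat) (P : nat -> vec3) : Prop :=
  (exists v q, rolling rho n P v q) /\
  (forall v q, rolling rho n P v q -> q 1 = qone).

(* Main.v *)
Require Import Defs.
From Stdlib Require Import Reals.
From Coquelicot Require Import Coquelicot.
From Stdlib Require Import Lra Lia Arith.
Open Scope R_scope.

Lemma vec3_eq a b : x1 a = x1 b -> x2 a = x2 b -> x3 a = x3 b -> a = b.
Proof. destruct a, b; simpl; intros; subst; reflexivity. Qed.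
Lemma quat_eq p q : qr p = qr q -> qi p = qi q -> qj p = qj q -> qk p = qk q -> p = q.
Proof. destruct p, q; simpl; intros; subst; reflexivity. Qed.

Definition qvec (n : vec3) := Q 0 (x1 n) (x2 n) (x3 n).
Definition qexp (x : R) (n : vec3) :=
  Q (cos x) (sin x * x1 n) (sin x * x2 n) (sin x * x3 n).
Definition Qk (x : R) := Q (cos x) 0 0 (sin x).
Definition qnorm q := qr q * qr q + qi q * qi q + qj q * qj q + qk q * qk q.
Definition qadd p q := Q (qr p + qr q) (qi p + qi q) (qj p + qj q) (qk p + qk q).

Lemma D_eq (f : R -> R) (x d d' : R) : is_derive f x d -> d = d' -> is_derive f x d'.
Proof. intros H ->; exact H. Qed.
Lemma D_mul (f g : R -> R) x df dg : is_derive f x df -> is_derive g x dg ->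
  is_derive (fun t => f t * g t) x (df * g x + f x * dg).
Proof. intros Hf Hg. exact (is_derive_mult f g x df dg Hf Hg Rmult_comm). Qed.
Lemma D_add (f g : R -> R) x df dg : is_derive f x df -> is_derive g x dg ->
  is_derive (fun t => f t + g t) x (df + dg).
Proof. intros Hf Hg. exact (is_derive_plus f g x df dg Hf Hg). Qed.
Lemma D_sub (f g : R -> R) x df dg : is_derive f x df -> is_derive g x dg ->
  is_derive (fun t => f t - g t) x (df - dg).
Proof. intros Hf Hg. exact (is_derive_minus f g x df dg Hf Hg). Qed.
Lemma D_const (c : R) x : is_derive (fun _ => c) x 0.
Proof. exact (is_derive_const c x). Qed.
Lemma D_id x : is_derive (fun t => t) x 1.
Proof. exact (is_derive_id x). Qed.
Lemma D_cos (f : R -> R) x df : is_derive f x df ->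
  is_derive (fun t => cos (f t)) x (- sin (f x) * df).
Proof. intros Hf. eapply D_eq. apply (is_derive_comp cos f x (- sin (f x)) df).
  auto_derive; auto; ring. exact Hf. simpl. unfold scal; simpl; unfold mult; simpl. ring. Qed.
Lemma D_sin (f : R -> R) x df : is_derive f x df ->
  is_derive (fun t => sin (f t)) x (cos (f x) * df).
Proof. intros Hf. eapply D_eq. apply (is_derive_comp sin f x (cos (f x)) df).
  auto_derive; auto; ring. exact Hf. simpl. unfold scal; simpl; unfold mult; simpl. ring. Qed.
Lemma D_unique (f : R -> R) x d1 d2 : is_derive f x d1 -> is_derive f x d2 -> d1 = d2.
Proof. intros H1 H2. rewrite <- (is_derive_unique _ _ _ H1). exact (is_derive_unique _ _ _ H2). Qed.

Lemma C_add (f g : R -> R) x : continuity_pt f x -> continuity_pt g x -> continuity_pt (fun t => f t + g t) x.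
Proof. intros; exact (continuity_pt_plus f g x H H0). Qed.
Lemma C_sub (f g : R -> R) x : continuity_pt f x -> continuity_pt g x -> continuity_pt (fun t => f t - g t) x.
Proof. intros; exact (continuity_pt_minus f g x H H0). Qed.
Lemma C_mul (f g : R -> R) x : continuity_pt f x -> continuity_pt g x -> continuity_pt (fun t => f t * g t) x.
Proof. intros; exact (continuity_pt_mult f g x H H0). Qed.
Lemma C_const (c : R) x : continuity_pt (fun _ => c) x.
Proof. exact (continuity_pt_const (fun _ => c) x (fun _ _ => eq_refl)). Qed.
Lemma C_cos (f : R -> R) x : continuity_pt f x -> continuity_pt (fun t => cos (f t)) x.
Proof. intros H. exact (continuity_pt_comp f cos x H (continuity_cos _)). Qed.
Lemma C_sin (f : R -> R) x : continuity_pt f x -> continuity_pt (fun t => sin (f t)) x.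
Proof. intros H. exact (continuity_pt_comp f sin x H (continuity_sin _)). Qed.

Lemma dot_comm a b : dot a b = dot b a. Proof. unfold dot; ring. Qed.
Lemma dot_scale_l k a b : dot (vscale k a) b = k * dot a b. Proof. unfold dot; simpl; ring. Qed.
Lemma dot_scale_r k a b : dot a (vscale k b) = k * dot a b. Proof. unfold dot; simpl; ring. Qed.
Lemma dot_add_l a b c : dot (vadd a b) c = dot a c + dot b c. Proof. unfold dot; simpl; ring. Qed.
Lemma dot_add_r a b c : dot a (vadd b c) = dot a b + dot a c. Proof. unfold dot; simpl; ring. Qed.
Lemma dot_cross_l a b : dot a (cross a b) = 0. Proof. unfold dot; simpl; ring. Qed.
Lemma dot_cross_r a b : dot b (cross a b) = 0. Proof. unfold dot; simpl; ring. Qed.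
Lemma lagrange a b : dot (cross a b) (cross a b) = dot a a * dot b b - dot a b * dot a b.
Proof. unfold dot; simpl; ring. Qed.
Lemma bac_cab a b c : cross a (cross b c) = vadd (vscale (dot a c) b) (vscale (- dot a b) c).
Proof. apply vec3_eq; unfold dot; simpl; ring. Qed.
Lemma cross_anti a b : cross a b = vscale (-1) (cross b a).
Proof. apply vec3_eq; simpl; ring. Qed.
Lemma cross_add_r a b c : cross a (vadd b c) = vadd (cross a b) (cross a c).
Proof. apply vec3_eq; simpl; ring. Qed.
Lemma cross_scale_r k a b : cross a (vscale k b) = vscale k (cross a b).
Proof. apply vec3_eq; simpl; ring. Qed.
Lemma triple_cyc a b c : det3 a b c = dot c (cross a b).
Proof. unfold det3, dot; simpl; ring. Qed.

Definition nh (a b : vec3) := cross a (arcdir a b).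

Section Edge.
Variables a b : vec3.
Hypothesis ua : dot a a = 1.
Hypothesis ub : dot b b = 1.
Hypothesis hc : dot a b * dot a b < 1.

Let c := dot a b.
Lemma sq_pos : 0 < sqrt (1 - dot a b * dot a b).
Proof. apply sqrt_lt_R0. lra. Qed.
Lemma sq_sq : sqrt (1 - dot a b * dot a b) * sqrt (1 - dot a b * dot a b) = 1 - dot a b * dot a b.
Proof. apply sqrt_sqrt. lra. Qed.

Lemma arcdir_unit : dot (arcdir a b) (arcdir a b) = 1.
Proof.
  unfold arcdir. rewrite dot_scale_l, dot_scale_r, !dot_add_l, !dot_add_r,
   !dot_scale_l, !dot_scale_r, ua, ub, (dot_comm b a).
  pose proof sq_pos; pose proof sq_sq.
  set (s := sqrt _) in *. transitivity (/ s * (/ s * (s*s))).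
  f_equal; f_equal; rewrite H0; ring. field; lra.
Qed.
Lemma arcdir_perp : dot a (arcdir a b) = 0.
Proof.
  unfold arcdir. rewrite dot_scale_r, dot_add_r, dot_scale_r, ua. ring.
Qed.
Lemma nh_unit : dot (nh a b) (nh a b) = 1.
Proof. unfold nh. rewrite lagrange, ua, arcdir_unit, arcdir_perp. ring. Qed.
Lemma nh_perp_a : dot (nh a b) a = 0.
Proof. unfold nh. rewrite dot_comm. apply dot_cross_l. Qed.
Lemma nh_perp_u : dot (nh a b) (arcdir a b) = 0.
Proof. unfold nh. rewrite dot_comm. apply dot_cross_r. Qed.

Lemma arc_unit s : dot (arc a b s) (arc a b s) = 1.
Proof.
  unfold arc. rewrite !dot_add_l, !dot_add_r, !dot_scale_l, !dot_scale_r, ua, arcdir_unit,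
   (dot_comm (arcdir a b) a), arcdir_perp.
  pose proof (sin2_cos2 s). unfold Rsqr in H. lra.
Qed.
Lemma arc_perp_nh s : dot (nh a b) (arc a b s) = 0.
Proof.
  unfold arc. rewrite dot_add_r, !dot_scale_r, nh_perp_a, nh_perp_u. ring.
Qed.
Lemma arc_0 : arc a b 0 = a.
Proof. unfold arc. rewrite cos_0, sin_0. apply vec3_eq; simpl; ring. Qed.
Lemma arc_end : arc a b (arclen a b) = b.
Proof.
  unfold arc, arclen. assert (Hb: -1 <= dot a b <= 1) by nra.
  rewrite cos_acos by exact Hb. rewrite sin_acos by exact Hb. unfold Rsqr.
  pose proof sq_pos. unfold arcdir. set (s := sqrt _) in *.
  apply vec3_eq; simpl; field; lra.
Qed.
Lemma cross_nh_arc s : cross (nh a b) (arc a b s) =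
  vadd (vscale (- sin s) a) (vscale (cos s) (arcdir a b)).
Proof.
  unfold arc. rewrite cross_add_r, !cross_scale_r. unfold nh.
  rewrite (cross_anti (cross a (arcdir a b)) a), (cross_anti (cross a (arcdir a b)) (arcdir a b)).
  rewrite !bac_cab, ua, arcdir_unit, (dot_comm (arcdir a b) a), arcdir_perp.
  apply vec3_eq; simpl; ring.
Qed.
Lemma arc_derive (phi : R -> R) (t dphi : R) : is_derive phi t dphi ->
  vderive (fun s => arc a b (phi s)) t (vscale dphi (cross (nh a b) (arc a b (phi t)))).
Proof.
  intros H. rewrite cross_nh_arc. unfold vderive, arc.
  split; [|split]; cbn [x1 x2 x3 vadd vscale];
  (eapply D_eq; [apply D_add; apply D_mul; [apply D_cos; exact H|apply D_const|apply D_sin; exact H|apply D_const] | cbv beta; ring]).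
Qed.
End Edge.

Ltac dsolve :=
 lazymatch goal with
 | |- is_derive (fun s => @?f s + @?g s) _ _ => apply (D_add f g); dsolve
 | |- is_derive (fun s => @?f s - @?g s) _ _ => apply (D_sub f g); dsolve
 | |- is_derive (fun s => @?f s * @?g s) _ _ => apply (D_mul f g); dsolve
 | |- is_derive (fun s => cos (@?f s)) _ _ => apply (D_cos f); dsolve
 | |- is_derive (fun s => sin (@?f s)) _ _ => apply (D_sin f); dsolve
 | _ => first [exact (D_const _ _) | eauto]
 end.

Lemma qmul_derive (p q : R -> quat) (t : R) dp dq : qderive p t dp -> qderive q t dq ->
  qderive (fun s => qmul (p s) (q s)) t (qadd (qmul dp (q t)) (qmul (p t) dq)).
Proof.
  intros [H1 [H2 [H3 H4]]] [G1 [G2 [G3 G4]]].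
  unfold qderive; split; [|split; [|split]]; cbn [qr qi qj qk qmul qadd];
  (eapply D_eq; [dsolve | cbv beta; ring]).
Qed.

Lemma qexp_derive (f : R -> R) (t df : R) n : is_derive f t df ->
  qderive (fun s => qexp (f s) n) t
    (qscale df (Q (- sin (f t)) (cos (f t) * x1 n) (cos (f t) * x2 n) (cos (f t) * x3 n))).
Proof.
  intros H. unfold qderive, qexp; split; [|split; [|split]]; cbn [qr qi qj qk qscale];
  (eapply D_eq; [dsolve | cbv beta; ring]).
Qed.

Lemma qconst_derive (c : quat) (t : R) : qderive (fun _ => c) t (Q 0 0 0 0).
Proof. unfold qderive; split; [|split; [|split]]; apply D_const. Qed.

Definition clamp (a b s : R) := Rmax a (Rmin b s).

Lemma clamp_in a b s : a <= s <= b -> clamp a b s = s.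
Proof. intros H. unfold clamp. rewrite Rmin_right by lra. rewrite Rmax_right by lra. reflexivity. Qed.

Lemma clamp_range a b s : a <= b -> a <= clamp a b s <= b.
Proof. intros H. unfold clamp, Rmax, Rmin. repeat destruct Rle_dec; lra. Qed.

Lemma clamp_lip a b s x : a <= x <= b -> Rabs (clamp a b s - x) <= Rabs (s - x).
Proof.
  intros H. unfold clamp, Rmax, Rmin. repeat destruct Rle_dec;
  unfold Rabs; repeat destruct Rcase_abs; lra.
Qed.

Lemma clamp_cont (f : R -> R) a b x : a <= x <= b ->
  filterlim f (within (fun s => a <= s <= b) (locally x)) (locally (f x)) ->
  continuity_pt (fun s => f (clamp a b s)) x.
Proof.
  intros Hx Hf. apply continuity_pt_filterlim. rewrite (clamp_in a b x Hx).
  eapply filterlim_comp; [|exact Hf].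
  intros P [eps HP]. exists eps. intros y Hy. apply HP.
  - unfold ball in *; simpl in *; unfold AbsRing_ball in *; simpl in *.
    unfold abs, minus, plus, opp in *; simpl in *.
    eapply Rle_lt_trans; [apply clamp_lip; exact Hx| exact Hy].
  - apply clamp_range. lra.
Qed.

Lemma MVT0 (f : R -> R) a b : a < b ->
  (forall x, a <= x <= b -> continuity_pt (fun s => f (clamp a b s)) x) ->
  (forall x, a < x < b -> is_derive f x 0) -> f b = f a.
Proof.
  intros Hab Hc Hd.
  destruct (MVT_gen (fun s => f (clamp a b s)) a b (fun _ => 0)) as [c [Hc1 Hc2]].
  - rewrite Rmin_left, Rmax_right by lra. intros x Hx.
    apply (is_derive_ext_loc f); [|apply Hd; exact Hx].
    assert (He: 0 < Rmin (x - a) (b - x)) by (apply Rmin_pos; lra).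
    exists (mkposreal _ He). intros y Hy. simpl in Hy.
    unfold ball in Hy; simpl in Hy; unfold AbsRing_ball, abs, minus, plus, opp in Hy; simpl in Hy.
    assert (Hm1 := Rmin_l (x - a) (b - x)). assert (Hm2 := Rmin_r (x - a) (b - x)).
    apply Rabs_def2 in Hy.
    rewrite clamp_in; [reflexivity|lra].
  - rewrite Rmin_left, Rmax_right by lra. exact Hc.
  - rewrite (clamp_in a b b), (clamp_in a b a) in Hc2 by lra. lra.
Qed.

Ltac csolve :=
 lazymatch goal with
 | |- continuity_pt (fun s => @?f s + @?g s) _ => apply (C_add f g); csolve
 | |- continuity_pt (fun s => @?f s - @?g s) _ => apply (C_sub f g); csolve
 | |- continuity_pt (fun s => @?f s * @?g s) _ => apply (C_mul f g); csolve
 | |- continuity_pt (fun s => cos (@?f s)) _ => apply (C_cos f); csolve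
 | |- continuity_pt (fun s => sin (@?f s)) _ => apply (C_sin f); csolve
 | _ => first [exact (C_const _ _) | eauto]
 end.

Lemma qmul_assoc p q r : qmul (qmul p q) r = qmul p (qmul q r).
Proof. apply quat_eq; simpl; ring. Qed.
Lemma qmul_one_l q : qmul qone q = q.
Proof. apply quat_eq; simpl; ring. Qed.
Lemma qexp_mul_neg x n : dot n n = 1 -> qmul (qexp x n) (qexp (- x) n) = qone.
Proof.
  intros Hn. unfold dot in Hn. pose proof (sin2_cos2 x) as Hs. unfold Rsqr in Hs.
  unfold qexp. rewrite cos_neg, sin_neg. apply quat_eq; simpl.
  - transitivity (cos x * cos x + sin x * sin x * (x1 n * x1 n + x2 n * x2 n + x3 n * x3 n)); [ring|].
    rewrite Hn. lra.
  - ring. - ring. - ring.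
Qed.
Lemma qexp_0 n : qexp 0 n = qone.
Proof. unfold qexp. rewrite cos_0, sin_0. apply quat_eq; simpl; ring. Qed.

Lemma loc_interior t0 t1 t (P : R -> Prop) : t0 < t < t1 ->
  (forall s, t0 < s < t1 -> P s) -> locally t P.
Proof.
  intros Ht HP.
  assert (He: 0 < Rmin (t - t0) (t1 - t)) by (apply Rmin_pos; lra).
  exists (mkposreal _ He). intros y Hy. simpl in Hy.
  unfold ball in Hy; simpl in Hy; unfold AbsRing_ball, abs, minus, plus, opp in Hy; simpl in Hy.
  assert (Hm1 := Rmin_l (t - t0) (t1 - t)). assert (Hm2 := Rmin_r (t - t0) (t1 - t)).
  apply Rabs_def2 in Hy. apply HP. lra.
Qed.

Definition rollhyp (v : R -> vec3) (q : R -> quat) (t : R) : Prop :=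
  exists dv dq, vderive v t dv /\ qderive q t dq /\
    let w := qscale 2 (qmul dq (qconj (q t))) in
    qr w = 0 /\ vscale (3 + 1) dv = cross (qim w) (v t) /\ dot (qim w) (v t) = 0.

Lemma r_alg (n : vec3) (x d : R) (q : quat) : dot n n = 1 ->
  qadd (qmul (qscale (-2*d) (Q (- sin x) (cos x * x1 n) (cos x * x2 n) (cos x * x3 n))) q)
       (qmul (qexp x n) (qscale (2*d) (qmul (qvec n) q))) = Q 0 0 0 0.
Proof.
  intros Hn. unfold dot in Hn. apply quat_eq; simpl.
  - transitivity (2 * d * sin x * (1 - (x1 n * x1 n + x2 n * x2 n + x3 n * x3 n)) * qr q); [ring|rewrite Hn; ring].
  - transitivity (2 * d * sin x * (1 - (x1 n * x1 n + x2 n * x2 n + x3 n * x3 n)) * qi q); [ring|rewrite Hn; ring].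
  - transitivity (2 * d * sin x * (1 - (x1 n * x1 n + x2 n * x2 n + x3 n * x3 n)) * qj q); [ring|rewrite Hn; ring].
  - transitivity (2 * d * sin x * (1 - (x1 n * x1 n + x2 n * x2 n + x3 n * x3 n)) * qk q); [ring|rewrite Hn; ring].
Qed.

Lemma qderive_eq (f : R -> quat) t d d' : qderive f t d -> d = d' -> qderive f t d'.
Proof. intros H ->; exact H. Qed.

Section EdgeU.
Variables (a b : vec3) (t0 t1 : R) (phi : R -> R) (v : R -> vec3) (q : R -> quat).
Hypotheses (ua : dot a a = 1) (ub : dot b b = 1) (hc : dot a b * dot a b < 1) (ht : t0 < t1)
  (hphi0 : phi t0 = 0) (hphi1 : phi t1 = arclen a b) (hcont : rcont_on t0 t1 phi)
  (hder : forall s, t0 < s < t1 -> ex_derive phi s)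
  (hv : forall s, t0 <= s <= t1 -> v s = arc a b (phi s))
  (hqc : qcont_on t0 t1 q) (hq1 : forall t, t0 <= t <= t1 -> on_S3 (q t))
  (hrol : forall t, t0 < t < t1 -> rollhyp v q t).

Lemma dq_formula t : t0 < t < t1 -> qderive q t (qscale (2 * Derive phi t) (qmul (qvec (nh a b)) (q t))).
Proof.
  intros Ht. destruct (hrol t Ht) as [dv [dq [Hv [Hq [Hw0 [Hw1 Hw2]]]]]].
  set (n := nh a b). set (d := Derive phi t).
  assert (Hphi : is_derive phi t d) by (apply Derive_correct; apply hder; exact Ht).
  pose proof (arc_derive a b ua ub hc phi t d Hphi) as Hva.
  assert (Hvt : v t = arc a b (phi t)) by (apply hv; lra).
  assert (Hloc : locally t (fun s => arc a b (phi s) = v s)).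
  { apply (loc_interior t0 t1); auto. intros s Hs. symmetry; apply hv; lra. }
  assert (Hdv : dv = vscale d (cross n (v t))).
  { destruct Hv as [Hv1 [Hv2 Hv3]]. destruct Hva as [Ha1 [Ha2 Ha3]].
    rewrite Hvt. apply vec3_eq.
    - eapply D_unique; [exact Hv1|]. eapply is_derive_ext_loc; [|exact Ha1].
      eapply filter_imp; [|exact Hloc]. intros s Hs; cbv beta; rewrite Hs; reflexivity.
    - eapply D_unique; [exact Hv2|]. eapply is_derive_ext_loc; [|exact Ha2].
      eapply filter_imp; [|exact Hloc]. intros s Hs; cbv beta; rewrite Hs; reflexivity.
    - eapply D_unique; [exact Hv3|]. eapply is_derive_ext_loc; [|exact Ha3].
      eapply filter_imp; [|exact Hloc]. intros s Hs; cbv beta; rewrite Hs; reflexivity. }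
  set (w := qscale 2 (qmul dq (qconj (q t)))) in *.
  assert (HVV : dot (v t) (v t) = 1) by (rewrite Hvt; apply arc_unit; auto).
  assert (HVn : dot (v t) n = 0) by (rewrite Hvt, dot_comm; apply arc_perp_nh; auto).
  assert (Hom : qim w = vscale (4 * d) n).
  { assert (E1 : qim w = cross (v t) (cross (qim w) (v t))).
    { rewrite bac_cab, HVV, (dot_comm (v t) (qim w)), Hw2. apply vec3_eq; simpl; ring. }
    rewrite E1, <- Hw1, Hdv, !cross_scale_r, bac_cab, HVV, HVn.
    apply vec3_eq; simpl; ring. }
  assert (Hwq : w = Q 0 (4 * d * x1 n) (4 * d * x2 n) (4 * d * x3 n)).
  { apply quat_eq; [exact Hw0| | |].
    - change (qi w) with (x1 (qim w)); rewrite Hom; reflexivity.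
    - change (qj w) with (x2 (qim w)); rewrite Hom; reflexivity.
    - change (qk w) with (x3 (qim w)); rewrite Hom; reflexivity. }
  assert (Hn1 : qnorm (q t) = 1) by (apply hq1; lra).
  assert (E : qmul w (q t) = qscale (2 * qnorm (q t)) dq).
  { unfold w. apply quat_eq; unfold qnorm; simpl; ring. }
  rewrite Hn1, Hwq in E. clearbody n d.
  replace dq with (qscale (2 * d) (qmul (qvec n) (q t))) in Hq; [exact Hq|].
  pose proof (f_equal qr E) as Er. pose proof (f_equal qi E) as Ei.
  pose proof (f_equal qj E) as Ej. pose proof (f_equal qk E) as Ek.
  simpl in Er, Ei, Ej, Ek.
  apply quat_eq; simpl.
  - replace (qr dq) with (/2 * (2 * 1 * qr dq)) by field. rewrite <- Er. field.
  - replace (qi dq) with (/2 * (2 * 1 * qi dq)) by field. rewrite <- Ei. field.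
  - replace (qj dq) with (/2 * (2 * 1 * qj dq)) by field. rewrite <- Ej. field.
  - replace (qk dq) with (/2 * (2 * 1 * qk dq)) by field. rewrite <- Ek. field.
Qed.

Lemma r_derive t : t0 < t < t1 ->
  qderive (fun s => qmul (qexp (-2 * phi s) (nh a b)) (q s)) t (Q 0 0 0 0).
Proof.
  intros Ht. set (d := Derive phi t).
  assert (Hphi : is_derive phi t d) by (apply Derive_correct; apply hder; exact Ht).
  assert (Hf : is_derive (fun s => -2 * phi s) t (-2 * d)).
  { eapply D_eq; [apply (D_mul (fun _ => -2) phi); [apply D_const | exact Hphi] | cbv beta; ring]. }
  pose proof (qmul_derive _ _ t _ _ (qexp_derive _ t _ (nh a b) Hf) (dq_formula t Ht)) as H.
  eapply qderive_eq; [exact H|]. apply r_alg. apply nh_unit; auto.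
Qed.

Lemma edge_unique : q t1 = qmul (qexp (2 * arclen a b) (nh a b)) (q t0).
Proof.
  set (r := fun s => qmul (qexp (-2 * phi s) (nh a b)) (q s)).
  destruct hqc as [Hqr [Hqi [Hqj Hqk]]].
  assert (Hcl : forall x, t0 <= x <= t1 ->
    continuity_pt (fun s => phi (clamp t0 t1 s)) x /\
    continuity_pt (fun s => qr (q (clamp t0 t1 s))) x /\
    continuity_pt (fun s => qi (q (clamp t0 t1 s))) x /\
    continuity_pt (fun s => qj (q (clamp t0 t1 s))) x /\
    continuity_pt (fun s => qk (q (clamp t0 t1 s))) x).
  { intros x Hx. split; [|split; [|split; [|split]]].
    apply (clamp_cont phi t0 t1 x Hx (hcont x Hx)).
    apply (clamp_cont (fun s => qr (q s)) t0 t1 x Hx (Hqr x Hx)).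
    apply (clamp_cont (fun s => qi (q s)) t0 t1 x Hx (Hqi x Hx)).
    apply (clamp_cont (fun s => qj (q s)) t0 t1 x Hx (Hqj x Hx)).
    apply (clamp_cont (fun s => qk (q s)) t0 t1 x Hx (Hqk x Hx)). }
  assert (Hrr : r t1 = r t0).
  { apply quat_eq.
    - apply (MVT0 (fun s => qr (r s))); auto.
      + intros x Hx. destruct (Hcl x Hx) as [C0 [C1 [C2 [C3 C4]]]].
        unfold r, qmul, qexp; cbn [qr qi qj qk]. csolve.
      + intros x Hx. exact (proj1 (r_derive x Hx)).
    - apply (MVT0 (fun s => qi (r s))); auto.
      + intros x Hx. destruct (Hcl x Hx) as [C0 [C1 [C2 [C3 C4]]]].
        unfold r, qmul, qexp; cbn [qr qi qj qk]. csolve.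
      + intros x Hx. exact (proj1 (proj2 (r_derive x Hx))).
    - apply (MVT0 (fun s => qj (r s))); auto.
      + intros x Hx. destruct (Hcl x Hx) as [C0 [C1 [C2 [C3 C4]]]].
        unfold r, qmul, qexp; cbn [qr qi qj qk]. csolve.
      + intros x Hx. exact (proj1 (proj2 (proj2 (r_derive x Hx)))).
    - apply (MVT0 (fun s => qk (r s))); auto.
      + intros x Hx. destruct (Hcl x Hx) as [C0 [C1 [C2 [C3 C4]]]].
        unfold r, qmul, qexp; cbn [qr qi qj qk]. csolve.
      + intros x Hx. exact (proj2 (proj2 (proj2 (r_derive x Hx)))). }
  unfold r in Hrr. rewrite hphi0, hphi1, Rmult_0_r, qexp_0, qmul_one_l in Hrr.
  rewrite <- Hrr, <- qmul_assoc.
  replace (-2 * arclen a b) with (- (2 * arclen a b)) by ring.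
  rewrite qexp_mul_neg, qmul_one_l; [reflexivity|]. apply nh_unit; auto.
Qed.
End EdgeU.

Fixpoint sumth (th : nat -> R) (i : nat) : R :=
  match i with 0 => 0 | S j => sumth th j + th j end.

Lemma Qk_mul x y : qmul (Qk x) (Qk y) = Qk (x + y).
Proof. unfold Qk. rewrite cos_plus, sin_plus. apply quat_eq; simpl; ring. Qed.
Lemma Qk_0 : Qk 0 = qone.
Proof. unfold Qk. rewrite cos_0, sin_0. reflexivity. Qed.

Lemma dot_lt1 a b c : dot a a = 1 -> dot b b = 1 -> det3 a b c <> 0 -> dot a b * dot a b < 1.
Proof.
  intros ua ub hd. destruct (Rlt_dec (dot a b * dot a b) 1) as [H|H]; [exact H|].
  exfalso. apply Rnot_lt_le in H. apply hd. pose proof (lagrange a b) as L. rewrite ua, ub in L.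
  rewrite triple_cyc. set (X := cross a b) in *.
  assert (L2 : dot X X <= 0) by lra. clearbody X. unfold dot in L2.
  assert (H1 : x1 X = 0) by nra. assert (H2 : x2 X = 0) by nra. assert (H3 : x3 X = 0) by nra.
  unfold dot. rewrite H1, H2, H3. ring.
Qed.

Lemma vert_unit n P i : nondeg_polygon n P -> dot (vert n P i) (vert n P i) = 1.
Proof.
  intros [H3 [Hu _]]. unfold vert. apply Hu. apply Nat.mod_upper_bound. lia.
Qed.

Lemma vert_lt1 n P i : nondeg_polygon n P -> (i < n)%nat ->
  dot (vert n P i) (vert n P (S i)) * dot (vert n P i) (vert n P (S i)) < 1.
Proof.
  intros HP Hi. pose proof HP as [_ [_ Hd]].
  apply (dot_lt1 _ _ (vert n P (i + 2))); try apply vert_unit; auto.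
  rewrite <- Nat.add_1_r. apply Hd; exact Hi.
Qed.

Lemma tt_mono n (tt : nat -> R) : (forall i, (i < n)%nat -> tt i < tt (S i)) ->
  forall k i, (i + k <= n)%nat -> tt i <= tt (i + k)%nat.
Proof.
  intros Hinc k. induction k as [|k IH]; intros i Hik.
  - rewrite Nat.add_0_r; lra.
  - eapply Rle_trans; [apply IH; lia|]. rewrite Nat.add_succ_r. left; apply Hinc; lia.
Qed.

Lemma tt_bounds n P tt v : traverses n P tt v -> forall i, (i <= n)%nat -> 0 <= tt i <= 1.
Proof.
  intros [H0 [Hn [Hinc _]]] i Hi. split.
  - rewrite <- H0. pose proof (tt_mono n tt Hinc i 0 ltac:(lia)) as H. exact H.
  - rewrite <- Hn. pose proof (tt_mono n tt Hinc (n - i) i ltac:(lia)) as H.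
    replace (i + (n - i))%nat with n in H by lia. exact H.
Qed.

Definition edgeQ (n : nat) (P : nat -> vec3) (i : nat) : quat :=
  qexp (2 * arclen (vert n P i) (vert n P (S i))) (nh (vert n P i) (vert n P (S i))).

Theorem uniq_all n P th : nondeg_polygon n P ->
  (forall i, (i < n)%nat -> edgeQ n P i = Qk (th i)) ->
  forall v q, rolling 3 n P v q -> q 1 = Qk (sumth th n).
Proof.
  intros HP Hth v q [tt [Htr [Hq0 [HS3 [Hqc Hrol]]]]].
  pose proof (tt_bounds n P tt v Htr) as Hb.
  destruct Htr as [H0 [Hn [Hinc Hedge]]].
  assert (Hall : forall i, (i <= n)%nat -> q (tt i) = Qk (sumth th i)).
  { induction i as [|i IH]; intros Hi.
    - rewrite H0, Hq0. simpl. rewrite Qk_0. reflexivity.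
    - simpl. destruct (Hedge i ltac:(lia)) as [phi [Hp0 [Hp1 [Hpm [Hpc [Hpd Hpv]]]]]].
      pose proof (Hb i ltac:(lia)) as Hbi. pose proof (Hb (S i) Hi) as Hbs.
      pose proof (edge_unique (vert n P i) (vert n P (S i)) (tt i) (tt (S i)) phi v q
        (vert_unit n P i HP) (vert_unit n P (S i) HP) (vert_lt1 n P i HP ltac:(lia))
        (Hinc i ltac:(lia)) Hp0 Hp1 Hpc Hpd Hpv (Hqc i ltac:(lia))
        (fun t Ht => HS3 t ltac:(lra)) (fun t Ht => Hrol i t ltac:(lia) Ht)) as HE.
      rewrite HE. fold (edgeQ n P i). rewrite Hth by lia. rewrite IH by lia. rewrite Qk_mul.
      f_equal; ring. }
  rewrite <- Hn. apply Hall. lia.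
Qed.

Lemma C_id x : continuity_pt (fun s => s) x.
Proof. exact (continuity_pt_id x). Qed.

Ltac csolve2 :=
 lazymatch goal with
 | |- continuity_pt (fun s => @?f s + @?g s) _ => apply (C_add f g); csolve2
 | |- continuity_pt (fun s => @?f s - @?g s) _ => apply (C_sub f g); csolve2
 | |- continuity_pt (fun s => @?f s * @?g s) _ => apply (C_mul f g); csolve2
 | |- continuity_pt (fun s => cos (@?f s)) _ => apply (C_cos f); csolve2
 | |- continuity_pt (fun s => sin (@?f s)) _ => apply (C_sin f); csolve2
 | _ => first [exact (C_const _ _) | exact (C_id _) | eauto]
 end.

Lemma within_of_cont (f g : R -> R) a b x : a <= x <= b ->
  (forall s, a <= s <= b -> f s = g s) -> continuity_pt g x ->
  filterlim f (within (fun s => a <= s <= b) (locally x)) (locally (f x)).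
Proof.
  intros Hx Hfg Hg. rewrite (Hfg x Hx).
  apply (filterlim_within_ext _ g f). intros s Hs; symmetry; apply Hfg; exact Hs.
  apply (filterlim_filter_le_1 g (filter_le_within _)).
  apply continuity_pt_filterlim. exact Hg.
Qed.

Lemma qnorm_mul p q : qnorm (qmul p q) = qnorm p * qnorm q.
Proof. unfold qnorm; simpl; ring. Qed.
Lemma qnorm_qexp x n : dot n n = 1 -> qnorm (qexp x n) = 1.
Proof.
  intros Hn. unfold dot in Hn. pose proof (sin2_cos2 x) as Hs. unfold Rsqr in Hs.
  unfold qnorm, qexp; simpl.
  transitivity (cos x * cos x + sin x * sin x * (x1 n * x1 n + x2 n * x2 n + x3 n * x3 n)); [ring|].
  rewrite Hn; lra.
Qed.
Lemma qnorm_Qk x : qnorm (Qk x) = 1.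
Proof. pose proof (sin2_cos2 x) as Hs. unfold Rsqr in Hs. unfold qnorm, Qk; simpl. lra. Qed.

Lemma w_alg (n : vec3) (x c : R) (K : quat) : dot n n = 1 -> qnorm K = 1 ->
  qscale 2 (qmul (qadd (qmul (qscale c (Q (- sin x) (cos x * x1 n) (cos x * x2 n) (cos x * x3 n))) K)
                        (qmul (qexp x n) (Q 0 0 0 0)))
                 (qconj (qmul (qexp x n) K)))
  = Q 0 (2 * c * x1 n) (2 * c * x2 n) (2 * c * x3 n).
Proof.
  intros Hn HK.
  assert (S1 : Q (- sin x) (cos x * x1 n) (cos x * x2 n) (cos x * x3 n) = qmul (qvec n) (qexp x n)).
  { unfold dot in Hn. apply quat_eq; simpl; try ring.
    transitivity (- sin x * (x1 n * x1 n + x2 n * x2 n + x3 n * x3 n)); [rewrite Hn; ring|ring]. }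
  rewrite S1. set (Qt := qmul (qexp x n) K).
  assert (HQ : qnorm Qt = 1) by (unfold Qt; rewrite qnorm_mul, qnorm_qexp, HK; auto; ring).
  assert (S2 : qadd (qmul (qscale c (qmul (qvec n) (qexp x n))) K) (qmul (qexp x n) (Q 0 0 0 0))
               = qscale c (qmul (qvec n) Qt)).
  { unfold Qt. apply quat_eq; simpl; ring. }
  rewrite S2. clearbody Qt. unfold qnorm in HQ.
  apply quat_eq; simpl.
  - ring.
  - transitivity (2 * c * x1 n * (qr Qt * qr Qt + qi Qt * qi Qt + qj Qt * qj Qt + qk Qt * qk Qt)); [ring|rewrite HQ; ring].
  - transitivity (2 * c * x2 n * (qr Qt * qr Qt + qi Qt * qi Qt + qj Qt * qj Qt + qk Qt * qk Qt)); [ring|rewrite HQ; ring].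
  - transitivity (2 * c * x3 n * (qr Qt * qr Qt + qi Qt * qi Qt + qj Qt * qj Qt + qk Qt * qk Qt)); [ring|rewrite HQ; ring].
Qed.

Lemma dot_V3_scale c u w : dot (V3 (c * x1 u) (c * x2 u) (c * x3 u)) w = c * dot u w.
Proof. unfold dot; simpl; ring. Qed.

Section Exist.
Variables (n : nat) (P : nat -> vec3) (th : nat -> R).
Hypothesis HP : nondeg_polygon n P.
Hypothesis Hth : forall i, (i < n)%nat -> edgeQ n P i = Qk (th i).

Let nr := INR n.
Lemma n3 : (3 <= n)%nat. Proof. destruct HP; auto. Qed.
Lemma nr_pos : 0 < nr. Proof. unfold nr. apply lt_0_INR. pose proof n3; lia. Qed.

Definition tt' (i : nat) : R := INR i / INR n.
Definition Lg (i : nat) : R := arclen (vert n P i) (vert n P (S i)).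
Definition ph (i : nat) (s : R) : R := Lg i * (INR n * s - INR i).
Definition nhi (i : nat) : vec3 := nh (vert n P i) (vert n P (S i)).

Fixpoint idx_aux (k : nat) (s : R) : nat :=
  match k with
  | O => O
  | S k' => if Rlt_dec (INR (S k') / INR n) s then S k' else idx_aux k' s
  end.
Definition idx (s : R) : nat := idx_aux (n - 1) s.

Definition vpiece (i : nat) (s : R) : vec3 := arc (vert n P i) (vert n P (S i)) (ph i s).
Definition qpiece (i : nat) (s : R) : quat := qmul (qexp (2 * ph i s) (nhi i)) (Qk (sumth th i)).
Definition Vf (s : R) : vec3 := vpiece (idx s) s.
Definition Qf (s : R) : quat := qpiece (idx s) s.

Lemma INR_div_le i j : (i <= j)%nat -> INR i / INR n <= INR j / INR n.
Proof.
  intros H. pose proof nr_pos. unfold nr in *. apply Rmult_le_compat_r.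
  left; apply Rinv_0_lt_compat; auto. apply le_INR; auto.
Qed.
Lemma INR_div_lt i j : (i < j)%nat -> INR i / INR n < INR j / INR n.
Proof.
  intros H. pose proof nr_pos. unfold nr in *. apply Rmult_lt_compat_r.
  apply Rinv_0_lt_compat; auto. apply lt_INR; auto.
Qed.

Lemma idx_aux_le k s : (idx_aux k s <= k)%nat.
Proof. induction k; simpl; [lia|]. destruct Rlt_dec; lia. Qed.
Lemma idx_lt s : (idx s < n)%nat.
Proof. unfold idx. pose proof (idx_aux_le (n - 1) s). pose proof n3. lia. Qed.

Lemma idx_aux_spec i s : INR i / INR n < s \/ i = O -> s <= INR (S i) / INR n ->
  forall k, (i <= k)%nat -> idx_aux k s = i.
Proof.
  intros H1 H2 k. induction k as [|k IH]; intros Hk.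
  - simpl. lia.
  - cbn [idx_aux]. destruct (Nat.eq_dec i (S k)) as [->|Hne].
    + destruct Rlt_dec as [|Hn]; [reflexivity|].
      destruct H1 as [H1|H1]; [contradiction|discriminate].
    + destruct Rlt_dec as [Hl|Hl].
      * exfalso. pose proof (INR_div_le (S i) (S k) ltac:(lia)). lra.
      * apply IH. lia.
Qed.

Lemma idx_spec i s : (i < n)%nat -> INR i / INR n < s \/ i = O -> s <= INR (S i) / INR n -> idx s = i.
Proof. intros Hi H1 H2. unfold idx. apply idx_aux_spec; auto. lia. Qed.

Lemma unit_v i : dot (vert n P i) (vert n P i) = 1.
Proof. apply vert_unit; auto. Qed.
Lemma lt1_v i : (i < n)%nat -> dot (vert n P i) (vert n P (S i)) * dot (vert n P i) (vert n P (S i)) < 1.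
Proof. intros; apply vert_lt1; auto. Qed.

Lemma ph_start i : ph i (tt' i) = 0.
Proof. unfold ph, tt'. pose proof nr_pos. unfold nr in *. field_simplify; [ring| lra]. Qed.
Lemma ph_end i : ph i (tt' (S i)) = Lg i.
Proof. unfold ph, tt'. pose proof nr_pos. unfold nr in *. rewrite S_INR. field. lra. Qed.

Lemma piece_on i s : (i < n)%nat -> tt' i <= s <= tt' (S i) ->
  Vf s = vpiece i s /\ Qf s = qpiece i s.
Proof.
  intros Hi Hs. unfold tt' in Hs.
  destruct (Rlt_dec (INR i / INR n) s) as [Hlt|Hge].
  - unfold Vf, Qf. rewrite (idx_spec i s); auto. lra.
  - assert (Hse : s = INR i / INR n) by lra. destruct i as [|j].
    + unfold Vf, Qf. rewrite (idx_spec 0 s); auto. lra.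
    + unfold Vf, Qf. rewrite (idx_spec j s); [| lia | left; subst s; apply INR_div_lt; lia | subst s; lra].
      fold (tt' (S j)) in Hse. subst s. split.
      * unfold vpiece. rewrite ph_end, ph_start. unfold Lg.
        rewrite arc_end by (apply unit_v || (apply lt1_v; lia)).
        rewrite arc_0 by (apply unit_v || (apply lt1_v; lia)). reflexivity.
      * unfold qpiece. rewrite ph_end, ph_start. unfold Lg, nhi.
        fold (edgeQ n P j). rewrite Hth by lia. rewrite Rmult_0_r, qexp_0, qmul_one_l, Qk_mul.
        simpl. f_equal. ring.
Qed.

Ltac dsolve2 :=
 lazymatch goal with
 | |- is_derive (fun s => @?f s + @?g s) _ _ => apply (D_add f g); dsolve2
 | |- is_derive (fun s => @?f s - @?g s) _ _ => apply (D_sub f g); dsolve2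
 | |- is_derive (fun s => @?f s * @?g s) _ _ => apply (D_mul f g); dsolve2
 | |- is_derive (fun s => cos (@?f s)) _ _ => apply (D_cos f); dsolve2
 | |- is_derive (fun s => sin (@?f s)) _ _ => apply (D_sin f); dsolve2
 | _ => first [exact (D_const _ _) | exact (D_id _) | eauto]
 end.

Lemma ph_derive i t : is_derive (ph i) t (Lg i * INR n).
Proof. unfold ph. eapply D_eq; [dsolve2| cbv beta; ring]. Qed.
Lemma ph2_derive i t : is_derive (fun s => 2 * ph i s) t (2 * (Lg i * INR n)).
Proof. unfold ph. eapply D_eq; [dsolve2| cbv beta; ring]. Qed.

Lemma Lg_nonneg i : 0 <= Lg i.
Proof. unfold Lg, arclen. apply acos_bound. Qed.

Lemma traverses_ok : traverses n P tt' Vf.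
Proof.
  pose proof nr_pos as Hnr. unfold nr in Hnr.
  split; [|split; [|split]].
  - unfold tt'. simpl. unfold Rdiv. ring.
  - unfold tt'. field. lra.
  - intros i Hi. apply INR_div_lt. lia.
  - intros i Hi. exists (ph i). split; [apply ph_start|]. split; [apply ph_end|].
    split; [|split; [|split]].
    + intros s u Hs Hsu Hu. unfold ph. apply Rmult_le_compat_l; [apply Lg_nonneg|]. nra.
    + intros x Hx. apply (within_of_cont _ (ph i)); auto. unfold ph. csolve2.
    + intros s Hs. exists (Lg i * INR n). apply ph_derive.
    + intros s Hs. destruct (piece_on i s Hi Hs) as [H _]. rewrite H. reflexivity.
Qed.

Lemma Qf_0 : Qf 0 = qone.
Proof.
  unfold Qf. rewrite (idx_spec 0 0); [| pose proof n3; lia | right; reflexivity | ].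
  - unfold qpiece, ph. simpl sumth. replace (2 * (Lg 0 * (INR n * 0 - INR 0))) with 0 by (simpl; ring).
    rewrite qexp_0, Qk_0, qmul_one_l. reflexivity.
  - apply Rlt_le, Rdiv_lt_0_compat; [apply lt_0_INR; lia | exact nr_pos].
Qed.

Lemma nhi_unit i : (i < n)%nat -> dot (nhi i) (nhi i) = 1.
Proof. intros Hi. unfold nhi. apply nh_unit; [apply unit_v | apply unit_v | apply lt1_v; auto]. Qed.

Lemma Qf_S3 t : on_S3 (Qf t).
Proof.
  change (qnorm (Qf t) = 1). unfold Qf, qpiece. rewrite qnorm_mul, qnorm_qexp, qnorm_Qk; [ring|].
  apply nhi_unit. apply idx_lt.
Qed.

Lemma qpiece_cont i x : continuity_pt (fun s => qr (qpiece i s)) x /\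
  continuity_pt (fun s => qi (qpiece i s)) x /\ continuity_pt (fun s => qj (qpiece i s)) x /\
  continuity_pt (fun s => qk (qpiece i s)) x.
Proof.
  unfold qpiece, qmul, qexp, Qk, ph; cbn [qr qi qj qk].
  split; [|split; [|split]]; csolve2.
Qed.

Lemma Qf_cont i : (i < n)%nat -> qcont_on (tt' i) (tt' (S i)) Qf.
Proof.
  intros Hi.
  split; [|split; [|split]]; intros x Hx; destruct (qpiece_cont i x) as [C1 [C2 [C3 C4]]].
  - apply (within_of_cont (fun s => qr (Qf s)) (fun s => qr (qpiece i s))); auto.
    intros s Hs. destruct (piece_on i s Hi Hs) as [_ H]. rewrite H. reflexivity.
  - apply (within_of_cont (fun s => qi (Qf s)) (fun s => qi (qpiece i s))); auto.
    intros s Hs. destruct (piece_on i s Hi Hs) as [_ H]. rewrite H. reflexivity.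
  - apply (within_of_cont (fun s => qj (Qf s)) (fun s => qj (qpiece i s))); auto.
    intros s Hs. destruct (piece_on i s Hi Hs) as [_ H]. rewrite H. reflexivity.
  - apply (within_of_cont (fun s => qk (Qf s)) (fun s => qk (qpiece i s))); auto.
    intros s Hs. destruct (piece_on i s Hi Hs) as [_ H]. rewrite H. reflexivity.
Qed.

Lemma ode_ok i t : (i < n)%nat -> tt' i < t < tt' (S i) -> rollhyp Vf Qf t.
Proof.
  intros Hi Ht.
  set (a := vert n P i). set (b := vert n P (S i)).
  set (nn := nhi i). set (d := Lg i * INR n). set (x := 2 * ph i t).
  set (K := Qk (sumth th i)).
  assert (Hloc : locally t (fun s => Vf s = vpiece i s /\ Qf s = qpiece i s)).
  { apply (loc_interior (tt' i) (tt' (S i))); auto. intros s Hs. apply piece_on; auto; lra. }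
  assert (Hvp := arc_derive a b (unit_v i) (unit_v (S i)) (lt1_v i Hi) (ph i) t d (ph_derive i t)).
  assert (Hqp := qmul_derive _ _ t _ _ (qexp_derive (fun s => 2 * ph i s) t (2 * d) nn (ph2_derive i t))
                   (qconst_derive K t)).
  destruct (piece_on i t Hi ltac:(lra)) as [HV HQ].
  exists (vscale d (cross (nh a b) (arc a b (ph i t)))).
  exists (qadd (qmul (qscale (2 * d) (Q (- sin x) (cos x * x1 nn) (cos x * x2 nn) (cos x * x3 nn))) K)
               (qmul (qexp x nn) (Q 0 0 0 0))).
  split; [|split].
  - destruct Hvp as [V1 [V2 V3]]. split; [|split].
    + eapply is_derive_ext_loc; [|exact V1]. eapply filter_imp; [|exact Hloc].
      intros s [Hs _]; cbv beta; rewrite Hs; reflexivity.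
    + eapply is_derive_ext_loc; [|exact V2]. eapply filter_imp; [|exact Hloc].
      intros s [Hs _]; cbv beta; rewrite Hs; reflexivity.
    + eapply is_derive_ext_loc; [|exact V3]. eapply filter_imp; [|exact Hloc].
      intros s [Hs _]; cbv beta; rewrite Hs; reflexivity.
  - destruct Hqp as [Q1 [Q2 [Q3 Q4]]]. split; [|split; [|split]].
    + eapply is_derive_ext_loc; [|exact Q1]. eapply filter_imp; [|exact Hloc].
      intros s [_ Hs]; cbv beta; rewrite Hs; reflexivity.
    + eapply is_derive_ext_loc; [|exact Q2]. eapply filter_imp; [|exact Hloc].
      intros s [_ Hs]; cbv beta; rewrite Hs; reflexivity.
    + eapply is_derive_ext_loc; [|exact Q3]. eapply filter_imp; [|exact Hloc].
      intros s [_ Hs]; cbv beta; rewrite Hs; reflexivity.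
    + eapply is_derive_ext_loc; [|exact Q4]. eapply filter_imp; [|exact Hloc].
      intros s [_ Hs]; cbv beta; rewrite Hs; reflexivity.
  - rewrite HQ. unfold qpiece. fold x. fold nn. fold K.
    rewrite (w_alg nn x (2 * d) K (nhi_unit i Hi) (qnorm_Qk _)).
    cbv zeta. rewrite HV. unfold vpiece. fold a b.
    assert (Hp : dot (nh a b) (arc a b (ph i t)) = 0) by (apply arc_perp_nh; try apply unit_v; try (apply lt1_v; auto)).
    fold nn in Hp |- *. unfold nn, nhi in Hp |- *. fold a b in Hp |- *.
    split; [reflexivity|split].
    + apply vec3_eq; simpl; ring.
    + unfold qim; cbn [qi qj qk]. rewrite dot_V3_scale, Hp. ring.
Qed.

Theorem exist_roll : exists v q, rolling 3 n P v q.
Proof.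
  exists Vf, Qf, tt'. split; [exact traverses_ok|]. split; [exact Qf_0|].
  split; [intros t _; apply Qf_S3|]. split; [intros i Hi; apply Qf_cont; auto|].
  intros i t Hi Ht. exact (ode_ok i t Hi Ht).
Qed.

End Exist.

Theorem abstract_main n P th (K : nat) : nondeg_polygon n P ->
  (forall i, (i < n)%nat -> edgeQ n P i = Qk (th i)) ->
  sumth th n = 2 * INR K * PI -> trivial_lifted_monodromy 3 n P.
Proof.
  intros HP Hth Hs. split.
  - apply (exist_roll n P th HP Hth).
  - intros v q Hr. rewrite (uniq_all n P th HP Hth v q Hr), Hs.
    unfold Qk. replace (2 * INR K * PI) with (0 + 2 * INR K * PI) by ring.
    rewrite cos_period, sin_period, cos_0, sin_0. reflexivity.
Qed.

Lemma edge_orth a b : dot a b = 0 -> qexp (2 * arclen a b) (nh a b) = Qk PI.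
Proof.
  intros H. unfold arclen. rewrite H, acos_0. replace (2 * (PI / 2)) with PI by field.
  unfold qexp, Qk. rewrite sin_PI, cos_PI. apply quat_eq; simpl; ring.
Qed.

Definition wv (x : R) : vec3 := V3 (cos x) (sin x) 0.

Lemma wv_unit x : dot (wv x) (wv x) = 1.
Proof. unfold dot, wv; simpl. pose proof (sin2_cos2 x). unfold Rsqr in H. lra. Qed.

Lemma cross_wv x y : cross (wv x) (wv y) = V3 0 0 (sin (y - x)).
Proof. unfold wv, cross; simpl. rewrite sin_minus. apply vec3_eq; simpl; ring. Qed.

Lemma edge_eq x D : 0 < D < PI -> qexp (2 * arclen (wv x) (wv (x + D))) (nh (wv x) (wv (x + D))) = Qk (2 * D).
Proof.
  intros HD.
  assert (Hd : dot (wv x) (wv (x + D)) = cos D).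
  { unfold dot, wv; simpl. replace D with ((x + D) - x) at 3 by ring. rewrite cos_minus. ring. }
  assert (Hs : sqrt (1 - cos D * cos D) = sin D).
  { pose proof (sin2_cos2 D). pose proof (sin_gt_0 D ltac:(lra) ltac:(lra)).
    replace (1 - cos D * cos D) with (Rsqr (sin D)) by (unfold Rsqr in *; lra).
    apply sqrt_Rsqr. lra. }
  assert (HsD := sin_gt_0 D ltac:(lra) ltac:(lra)).
  unfold arclen. rewrite Hd, acos_cos by lra.
  assert (Hn : nh (wv x) (wv (x + D)) = V3 0 0 1).
  { unfold nh, arcdir. rewrite Hd, Hs, cross_scale_r, cross_add_r, cross_scale_r, cross_wv.
    replace (x + D - x) with D by ring.
    apply vec3_eq; unfold wv; simpl; field; lra. }
  rewrite Hn. unfold qexp, Qk. apply quat_eq; simpl; ring.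
Qed.

Definition Av : vec3 := wv (- (PI / 4)).
Definition Bv (D : R) : vec3 := wv (- (PI / 4) + D).
Definition Nv : vec3 := V3 0 0 1.
Definition reg (D : R) (j : nat) : vec3 :=
  match j with O => Av | 1%nat => Bv D | _ => Nv end.
Definition Pf (s : nat) (sp : nat -> vec3) (D : R) (i : nat) : vec3 :=
  if (i <? s)%nat then sp i else reg D ((i - s) mod 3).
Definition thf (s : nat) (D : R) (i : nat) : R :=
  if (i <? s)%nat then (if (i =? 0)%nat then PI / 2 else PI)
  else match ((i - s) mod 3)%nat with O => 2 * D | _ => PI end.

Lemma mod3_shift q r : ((3 * q + r) mod 3 = r mod 3)%nat.
Proof. replace (3 * q + r)%nat with (r + q * 3)%nat by lia. apply Nat.Div0.mod_add. Qed.

Lemma Pf_at s sp D q r : Pf s sp D (s + (3 * q + r)) = reg D (r mod 3).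
Proof.
  unfold Pf. destruct (Nat.ltb_spec (s + (3 * q + r)) s); [lia|].
  replace (s + (3 * q + r) - s)%nat with (3 * q + r)%nat by lia. rewrite mod3_shift. reflexivity.
Qed.
Lemma thf_at s D q r : thf s D (s + (3 * q + r)) = match (r mod 3)%nat with O => 2 * D | _ => PI end.
Proof.
  unfold thf. destruct (Nat.ltb_spec (s + (3 * q + r)) s); [lia|].
  replace (s + (3 * q + r) - s)%nat with (3 * q + r)%nat by lia. rewrite mod3_shift. reflexivity.
Qed.

Lemma det_wv x y : det3 (wv x) (wv y) Nv = sin (y - x).
Proof. unfold det3. rewrite (cross_anti (wv y) Nv). unfold dot, wv, Nv; simpl. rewrite sin_minus. ring. Qed.
Lemma det_ABN D : det3 Av (Bv D) Nv = sin D.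
Proof. unfold Av, Bv. rewrite det_wv. f_equal. ring. Qed.
Lemma det_cyc a b c : det3 a b c = det3 b c a.
Proof. unfold det3, dot; simpl; ring. Qed.

Lemma Nv_unit : dot Nv Nv = 1. Proof. unfold dot, Nv; simpl; ring. Qed.
Lemma reg_unit D j : dot (reg D j) (reg D j) = 1.
Proof. destruct j as [|[|j]]; simpl; try apply wv_unit; apply Nv_unit. Qed.

Lemma sumth_S3 th x : sumth th (S (S (S x))) = sumth th x + th x + th (S x) + th (S (S x)).
Proof. simpl. ring. Qed.

Section Poly.
Variables (s : nat) (sp : nat -> vec3) (D : R) (m : nat).
Hypothesis HD : 0 < D < PI.
Hypothesis Hm : (1 <= m)%nat.
Hypothesis HP0 : Pf s sp D 0 = Av.
Hypothesis Hsu : forall i, (i < s)%nat -> dot (sp i) (sp i) = 1.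
Hypothesis Hsd : forall i, (i < s)%nat ->
  det3 (Pf s sp D i) (Pf s sp D (i + 1)) (Pf s sp D (i + 2)) <> 0.
Hypothesis Hwrap : det3 Nv Av (Pf s sp D 1) <> 0.
Hypothesis Hse : forall i, (i < s)%nat ->
  qexp (2 * arclen (Pf s sp D i) (Pf s sp D (S i))) (nh (Pf s sp D i) (Pf s sp D (S i)))
  = Qk (thf s D i).

Let n := (s + 3 * m)%nat.
Let P := Pf s sp D.

Lemma vert_lt i : (i < n)%nat -> vert n P i = P i.
Proof. intros H. unfold vert. rewrite Nat.mod_small; auto. Qed.
Lemma vert_n : vert n P n = P 0.
Proof. unfold vert. rewrite Nat.Div0.mod_same. reflexivity. Qed.
Lemma vert_n1 : vert n P (n + 1) = P 1.
Proof.
  unfold vert. replace (n + 1)%nat with (1 + 1 * n)%nat by lia. rewrite Nat.Div0.mod_add.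
  rewrite Nat.mod_small; [reflexivity|]. unfold n; lia.
Qed.

Lemma sinD : sin D <> 0.
Proof. pose proof (sin_gt_0 D ltac:(lra) ltac:(lra)). lra. Qed.

Lemma decomp i : (s <= i)%nat -> exists q r, (r < 3)%nat /\ i = (s + (3 * q + r))%nat.
Proof.
  intros H. exists ((i - s) / 3)%nat, ((i - s) mod 3)%nat. split.
  apply Nat.mod_upper_bound; lia. pose proof (Nat.div_mod (i - s) 3 ltac:(lia)). lia.
Qed.

Lemma poly_nondeg : nondeg_polygon n P.
Proof.
  split; [unfold n; lia|]. split.
  - intros i Hi. unfold P, Pf. destruct (Nat.ltb_spec i s); [apply Hsu; auto | apply reg_unit].
  - intros i Hi.
    destruct (Nat.lt_ge_cases (i + 2) n) as [H2|H2].
    + rewrite !vert_lt by lia.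
      destruct (Nat.lt_ge_cases i s) as [Hs|Hs]; [apply Hsd; auto|].
      destruct (decomp i Hs) as [q [r [Hr ->]]].
      replace (s + (3 * q + r) + 1)%nat with (s + (3 * q + (r + 1)))%nat by lia.
      replace (s + (3 * q + r) + 2)%nat with (s + (3 * q + (r + 2)))%nat by lia.
      unfold P; rewrite !Pf_at.
      destruct r as [|[|[|r]]]; try lia; simpl.
      * rewrite det_ABN. apply sinD.
      * rewrite det_cyc, det_cyc, det_ABN. apply sinD.
      * rewrite det_cyc, det_ABN. apply sinD.
    + destruct (Nat.eq_dec (i + 2) n) as [E|E].
      * rewrite (vert_lt i), (vert_lt (i + 1)) by lia. rewrite E, vert_n. unfold P; rewrite HP0.
        replace i with (s + (3 * (m - 1) + 1))%nat by (unfold n in *; lia).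
        replace (s + (3 * (m - 1) + 1) + 1)%nat with (s + (3 * (m - 1) + 2))%nat by lia.
        rewrite !Pf_at. simpl. rewrite det_cyc, det_cyc, det_ABN. apply sinD.
      * assert (E1 : (i + 1 = n)%nat) by lia.
        rewrite (vert_lt i) by lia. rewrite E1, vert_n.
        replace (i + 2)%nat with (n + 1)%nat by lia. rewrite vert_n1. unfold P; rewrite HP0.
        replace i with (s + (3 * (m - 1) + 2))%nat by (unfold n in *; lia).
        rewrite Pf_at. simpl. exact Hwrap.
Qed.

Lemma poly_edges : forall i, (i < n)%nat -> edgeQ n P i = Qk (thf s D i).
Proof.
  intros i Hi. unfold edgeQ.
  destruct (Nat.lt_ge_cases (S i) n) as [H1|H1].
  - rewrite !vert_lt by lia.
    destruct (Nat.lt_ge_cases i s) as [Hs|Hs]; [apply Hse; auto|].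
    destruct (decomp i Hs) as [q [r [Hr ->]]].
    rewrite thf_at.
    destruct r as [|[|[|r]]]; try lia.
    + replace (S (s + (3 * q + 0))) with (s + (3 * q + 1))%nat by lia.
      unfold P; rewrite !Pf_at. simpl. apply edge_eq. exact HD.
    + replace (S (s + (3 * q + 1))) with (s + (3 * q + 2))%nat by lia.
      unfold P; rewrite !Pf_at. simpl. apply edge_orth. unfold dot, Bv, wv, Nv; simpl; ring.
    + replace (S (s + (3 * q + 2))) with (s + (3 * (S q) + 0))%nat by lia.
      unfold P; rewrite !Pf_at. simpl. apply edge_orth. unfold dot, Av, wv, Nv; simpl; ring.
  - assert (E1 : (S i = n)%nat) by lia. rewrite (vert_lt i) by lia. rewrite E1, vert_n.
    unfold P; rewrite HP0.
    replace i with (s + (3 * (m - 1) + 2))%nat by (unfold n in *; lia).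
    rewrite Pf_at, thf_at. simpl. apply edge_orth. unfold dot, Av, wv, Nv; simpl; ring.
Qed.

Lemma poly_sum k : sumth (thf s D) (s + 3 * k) = sumth (thf s D) s + INR k * (2 * D + 2 * PI).
Proof.
  induction k as [|k IH].
  - rewrite Nat.add_0_r. simpl. ring.
  - replace (s + 3 * S k)%nat with (S (S (S (s + 3 * k))))%nat by lia.
    rewrite sumth_S3, IH.
    assert (T0 : thf s D (s + 3 * k) = 2 * D).
    { replace (s + 3 * k)%nat with (s + (3 * k + 0))%nat by lia. rewrite thf_at; reflexivity. }
    assert (T1 : thf s D (S (s + 3 * k)) = PI).
    { replace (S (s + 3 * k))%nat with (s + (3 * k + 1))%nat by lia. rewrite thf_at; reflexivity. }
    assert (T2 : thf s D (S (S (s + 3 * k))) = PI).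
    { replace (S (S (s + 3 * k)))%nat with (s + (3 * k + 2))%nat by lia. rewrite thf_at; reflexivity. }
    rewrite T0, T1, T2, S_INR. ring.
Qed.

End Poly.

Definition c2 : R := / sqrt 2.
Definition d3 : R := / sqrt 3.
Lemma c2_pos : 0 < c2. Proof. unfold c2. apply Rinv_0_lt_compat, sqrt_lt_R0. lra. Qed.
Lemma d3_pos : 0 < d3. Proof. unfold d3. apply Rinv_0_lt_compat, sqrt_lt_R0. lra. Qed.
Lemma c2_sq : c2 * c2 = / 2.
Proof. unfold c2. pose proof (sqrt_sqrt 2 ltac:(lra)). pose proof (sqrt_lt_R0 2 ltac:(lra)).
  rewrite <- Rinv_mult, H; reflexivity. Qed.
Lemma d3_sq : d3 * d3 = / 3.
Proof. unfold d3. pose proof (sqrt_sqrt 3 ltac:(lra)). pose proof (sqrt_lt_R0 3 ltac:(lra)).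
  rewrite <- Rinv_mult, H; reflexivity. Qed.

Lemma Av_eq : Av = V3 c2 (- c2) 0.
Proof. unfold Av, wv. rewrite cos_neg, sin_neg, cos_PI4, sin_PI4. unfold c2.
  apply vec3_eq; simpl; unfold Rdiv; ring. Qed.

Definition E1 : vec3 := V3 1 0 0.
Definition X1 : vec3 := V3 0 c2 c2.
Definition Y2 : vec3 := V3 d3 d3 (- d3).
Definition X2 : vec3 := V3 0 c2 (- c2).
Definition X3 : vec3 := V3 d3 d3 d3.

Lemma E1_wv : E1 = wv (- (PI / 4) + PI / 4).
Proof. replace (- (PI / 4) + PI / 4) with 0 by ring. unfold E1, wv. rewrite cos_0, sin_0. reflexivity. Qed.

Lemma cross_AB D : cross Av (Bv D) = V3 0 0 (sin D).
Proof. unfold Av, Bv. rewrite cross_wv. f_equal. f_equal. ring. Qed.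

Definition sp4 (i : nat) : vec3 := match i with O => Av | 1%nat => E1 | 2%nat => X1 | _ => Y2 end.
Definition sp5 (i : nat) : vec3 := match i with O => Av | 1%nat => E1 | 2%nat => X1 | 3%nat => X2 | _ => X3 end.

Lemma edge_AE : qexp (2 * arclen Av E1) (nh Av E1) = Qk (PI / 2).
Proof. rewrite E1_wv. unfold Av. rewrite edge_eq. f_equal; field.
  pose proof PI_RGT_0. lra. Qed.

Ltac unitsolve := unfold dot; simpl; pose proof c2_sq; pose proof d3_sq; try rewrite Av_eq; simpl; nra.

Lemma case4 (m : nat) : (1 <= m)%nat ->
  nondeg_polygon (4 + 3 * m) (Pf 4 sp4 (PI / (4 * INR m))) /\
  trivial_lifted_monodromy 3 (4 + 3 * m) (Pf 4 sp4 (PI / (4 * INR m))).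
Proof.
  intros Hm. set (D := PI / (4 * INR m)).
  assert (Hmr : 1 <= INR m) by (change 1 with (INR 1); apply le_INR; lia).
  pose proof PI_RGT_0 as Hpi.
  assert (HD : 0 < D < PI).
  { unfold D. split. apply Rdiv_lt_0_compat; lra.
    apply (Rmult_lt_reg_r (4 * INR m)); [lra|]. unfold Rdiv. rewrite Rmult_assoc, Rinv_l by lra. nra. }
  pose proof c2_pos; pose proof d3_pos; pose proof c2_sq; pose proof d3_sq.
  assert (HP0 : Pf 4 sp4 D 0 = Av) by reflexivity.
  assert (Hsu : forall i, (i < 4)%nat -> dot (sp4 i) (sp4 i) = 1).
  { intros i Hi. destruct i as [|[|[|[|i]]]]; try lia; simpl.
    - apply wv_unit.
    - unfold dot, E1; simpl; ring.
    - unfold dot, X1; simpl. lra.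
    - unfold dot, Y2; simpl. lra. }
  assert (Hsd : forall i, (i < 4)%nat ->
    det3 (Pf 4 sp4 D i) (Pf 4 sp4 D (i + 1)) (Pf 4 sp4 D (i + 2)) <> 0).
  { intros i Hi. destruct i as [|[|[|[|i]]]]; try lia; unfold Pf; simpl.
    - rewrite Av_eq. unfold det3, dot, E1, X1; simpl. nra.
    - unfold det3, dot, E1, X1, Y2; simpl. nra.
    - rewrite Av_eq. unfold det3, dot, X1, Y2; simpl. intro Hc. nra.
    - unfold det3. rewrite cross_AB. unfold dot, Y2; simpl.
      pose proof (sin_gt_0 D ltac:(lra) ltac:(lra)). nra. }
  assert (Hwrap : det3 Nv Av (Pf 4 sp4 D 1) <> 0).
  { unfold Pf; simpl. rewrite Av_eq. unfold det3, dot, Nv, E1; simpl. nra. }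
  assert (Hse : forall i, (i < 4)%nat ->
    qexp (2 * arclen (Pf 4 sp4 D i) (Pf 4 sp4 D (S i))) (nh (Pf 4 sp4 D i) (Pf 4 sp4 D (S i)))
    = Qk (thf 4 D i)).
  { intros i Hi. destruct i as [|[|[|[|i]]]]; try lia; unfold Pf, thf; simpl.
    - apply edge_AE.
    - apply edge_orth. unfold dot, E1, X1; simpl; ring.
    - apply edge_orth. unfold dot, X1, Y2; simpl; ring.
    - apply edge_orth. rewrite Av_eq. unfold dot, Y2; simpl; ring. }
  assert (HN : nondeg_polygon (4 + 3 * m) (Pf 4 sp4 D)).
  { apply (poly_nondeg 4 sp4 D m); auto. }
  split; [exact HN|].
  apply (abstract_main _ _ (thf 4 D) (m + 2)); [exact HN| |].
  - apply (poly_edges 4 sp4 D m); auto.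
  - rewrite (poly_sum 4 D m Hm m). unfold thf; simpl. rewrite plus_INR. unfold D. simpl. field. lra.
Qed.

Lemma case5 (m : nat) : (1 <= m)%nat ->
  nondeg_polygon (5 + 3 * m) (Pf 5 sp5 (3 * PI / (4 * INR m))) /\
  trivial_lifted_monodromy 3 (5 + 3 * m) (Pf 5 sp5 (3 * PI / (4 * INR m))).
Proof.
  intros Hm. set (D := 3 * PI / (4 * INR m)).
  assert (Hmr : 1 <= INR m) by (change 1 with (INR 1); apply le_INR; lia).
  pose proof PI_RGT_0 as Hpi.
  assert (HD : 0 < D < PI).
  { unfold D. split. apply Rdiv_lt_0_compat; lra.
    apply (Rmult_lt_reg_r (4 * INR m)); [lra|]. unfold Rdiv. rewrite Rmult_assoc, Rinv_l by lra. nra. }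
  pose proof c2_pos; pose proof d3_pos; pose proof c2_sq; pose proof d3_sq.
  assert (HP0 : Pf 5 sp5 D 0 = Av) by reflexivity.
  assert (Hsu : forall i, (i < 5)%nat -> dot (sp5 i) (sp5 i) = 1).
  { intros i Hi. destruct i as [|[|[|[|[|i]]]]]; try lia; simpl.
    - apply wv_unit.
    - unfold dot, E1; simpl; ring.
    - unfold dot, X1; simpl. lra.
    - unfold dot, X2; simpl. lra.
    - unfold dot, X3; simpl. lra. }
  assert (Hsd : forall i, (i < 5)%nat ->
    det3 (Pf 5 sp5 D i) (Pf 5 sp5 D (i + 1)) (Pf 5 sp5 D (i + 2)) <> 0).
  { intros i Hi. destruct i as [|[|[|[|[|i]]]]]; try lia; unfold Pf; simpl.
    - rewrite Av_eq. unfold det3, dot, E1, X1; simpl. nra.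
    - unfold det3, dot, E1, X1, X2; simpl. nra.
    - unfold det3, dot, X1, X2, X3; simpl. intro Hc. nra.
    - rewrite Av_eq. unfold det3, dot, X2, X3; simpl. intro Hc. nra.
    - unfold det3. rewrite cross_AB. unfold dot, X3; simpl.
      pose proof (sin_gt_0 D ltac:(lra) ltac:(lra)). nra. }
  assert (Hwrap : det3 Nv Av (Pf 5 sp5 D 1) <> 0).
  { unfold Pf; simpl. rewrite Av_eq. unfold det3, dot, Nv, E1; simpl. nra. }
  assert (Hse : forall i, (i < 5)%nat ->
    qexp (2 * arclen (Pf 5 sp5 D i) (Pf 5 sp5 D (S i))) (nh (Pf 5 sp5 D i) (Pf 5 sp5 D (S i)))
    = Qk (thf 5 D i)).
  { intros i Hi. destruct i as [|[|[|[|[|i]]]]]; try lia; unfold Pf, thf; simpl.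
    - apply edge_AE.
    - apply edge_orth. unfold dot, E1, X1; simpl; ring.
    - apply edge_orth. unfold dot, X1, X2; simpl; ring.
    - apply edge_orth. unfold dot, X2, X3; simpl; ring.
    - apply edge_orth. rewrite Av_eq. unfold dot, X3; simpl; ring. }
  assert (HN : nondeg_polygon (5 + 3 * m) (Pf 5 sp5 D)).
  { apply (poly_nondeg 5 sp5 D m); auto. }
  split; [exact HN|].
  apply (abstract_main _ _ (thf 5 D) (m + 3)); [exact HN| |].
  - apply (poly_edges 5 sp5 D m); auto.
  - rewrite (poly_sum 5 D m Hm m). unfold thf; simpl. rewrite plus_INR. unfold D. simpl. field. lra.
Qed.

Lemma case0 (m : nat) : (2 <= m)%nat ->
  nondeg_polygon (0 + 3 * m) (Pf 0 (fun _ => Av) (PI / INR m)) /\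
  trivial_lifted_monodromy 3 (0 + 3 * m) (Pf 0 (fun _ => Av) (PI / INR m)).
Proof.
  intros Hm. set (D := PI / INR m).
  assert (Hmr : 2 <= INR m) by (change 2 with (INR 2); apply le_INR; lia).
  pose proof PI_RGT_0 as Hpi.
  assert (HD : 0 < D < PI).
  { unfold D. split. apply Rdiv_lt_0_compat; lra.
    apply (Rmult_lt_reg_r (INR m)); [lra|]. unfold Rdiv. rewrite Rmult_assoc, Rinv_l by lra. nra. }
  assert (HP0 : Pf 0 (fun _ => Av) D 0 = Av) by reflexivity.
  assert (HN : nondeg_polygon (0 + 3 * m) (Pf 0 (fun _ => Av) D)).
  { apply (poly_nondeg 0 (fun _ => Av) D m); auto; try lia.
    unfold Pf; simpl. rewrite det_cyc, det_ABN. pose proof (sin_gt_0 D ltac:(lra) ltac:(lra)). lra. }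
  split; [exact HN|].
  apply (abstract_main _ _ (thf 0 D) (m + 1)); [exact HN| |].
  - apply (poly_edges 0 (fun _ => Av) D m); auto; try lia.
  - assert (Hm1 : (1 <= m)%nat) by lia.
    rewrite (poly_sum 0 D m Hm1 m). simpl. rewrite plus_INR. unfold D. simpl. field. lra.
Qed.

Theorem corollary1 :
  forall n : nat, (6 <= n)%nat ->
    exists P : nat -> vec3,
      nondeg_polygon n P /\ trivial_lifted_monodromy 3 n P.
Proof.
  intros n Hn.
  pose proof (Nat.div_mod n 3 ltac:(lia)) as Hd.
  pose proof (Nat.mod_upper_bound n 3 ltac:(lia)) as Hr.
  set (q := (n / 3)%nat) in *. set (r := (n mod 3)%nat) in *.
  destruct r as [|[|[|r']]] eqn:Er; try lia.
  - replace n with (0 + 3 * q)%nat by lia. eexists. apply case0. lia.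
  - replace n with (4 + 3 * (q - 1))%nat by lia. eexists. apply case4. lia.
  - replace n with (5 + 3 * (q - 1))%nat by lia. eexists. apply case5. lia.
Qed.
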